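(* Let $0<a<1$. Then, as $t\to-\infty$, $$f(t,a)\sim-\frac{1}{\ln(-t/a)+\ln\bigl(\ln(-t/a)-1\bigr)},$$ where $f(t,a)=t\int_0^1(ax)^{-tx}\,dx$. In particular $f(t,a)\to0$ inverse-logarithmically as $t\to-\infty$.
   Context: For real $a>0$ and real $t$, $f(t,a)=t\int_0^1 (ax)^{-tx}\,dx$, where $(ax)^{-tx}=\exp(-tx\ln(ax))$ for $x\in(0,1]$. The notation $g\sim h$ means $g/h\to1$. *)

(* Defs.v *)
From Stdlib Require Import Reals.
From Coquelicot Require Import Coquelicot.
Open Scope R_scope.

(* (a x)^(-t x) := exp(-t x ln(a x)) for x in (0,1].  At x = 0 Stdlib's total
   [ln] gives ln 0 = 0, so the integrand equals 1 there, which is its limit;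
   in any case a single point does not affect the Riemann integral. *)
Definition integrand (t a x : R) : R := exp (- t * x * ln (a * x)).

Definition fta (t a : R) : R := t * RInt (fun x => integrand t a x) 0 1.

Definition gta (t a : R) : R := - / (ln (- t / a) + ln (ln (- t / a) - 1)).

(* Main.v *)
Require Import Defs.
From Stdlib Require Import Reals Lra Psatz.
From Coquelicot Require Import Coquelicot.
Open Scope R_scope.

Lemma ln_nonpos y : y <= 0 -> ln y = 0.
Proof. intros H; unfold ln; destruct (Rlt_dec 0 y) as [h|h]. - exfalso; lra. - reflexivity. Qed.

Lemma ln_lt_self z : 0 < z -> ln z < z.
Proof.
  intros Hz. assert (H := exp_ineq1_le z).
  rewrite <- (ln_exp z) at 2. apply ln_increasing; lra.
Qed.

Lemma h_cont0 a : 0 < a < 1 -> continuity_pt (fun x => x * ln (a * x)) 0.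
Proof.
  intros [ha0 ha1].
  unfold continuity_pt, continue_in, limit1_in, limit_in. intros eps Heps.
  exists (Rmin 1 (a*eps*eps/4)). split.
  { apply Rmin_pos; [lra|]. assert (0 < a*eps) by nra. assert (0 < a*eps*eps) by nra. lra. }
  intros x [_ Hx]. simpl in *. unfold R_dist in *.
  rewrite Rmult_0_l, Rminus_0_r in *.
  destruct (Rle_lt_dec x 0) as [Hle|Hlt].
  { rewrite (ln_nonpos (a*x)) by nra. rewrite Rmult_0_r, Rabs_R0. lra. }
  rewrite Rabs_pos_eq in Hx by lra.
  assert (Hx1 : x < 1) by (eapply Rlt_le_trans; [exact Hx| apply Rmin_l]).
  assert (Hx2 : x < a*eps*eps/4) by (eapply Rlt_le_trans; [exact Hx| apply Rmin_r]).
  set (w := sqrt (a*x)).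
  assert (Hw0 : 0 < w) by (apply sqrt_lt_R0; nra).
  assert (Hw2 : w * w = a * x) by (apply sqrt_sqrt; nra).
  assert (Hln : ln (a*x) = 2 * ln w).
  { rewrite <- Hw2, ln_mult by lra. ring. }
  assert (Hlw : - ln w < / w).
  { rewrite <- ln_Rinv by lra. apply ln_lt_self. apply Rinv_0_lt_compat; lra. }
  assert (Hw1 : w < 1) by nra.
  assert (Hlw0 : ln w < 0).
  { rewrite <- ln_1. apply ln_increasing; lra. }
  rewrite Hln.
  rewrite Rabs_left by nra.
  assert (Hq : a * x < a * (a*eps*eps/4)) by (apply Rmult_lt_compat_l; lra).
  assert (Hq2 : w * w < (a*eps/2)*(a*eps/2)) by (rewrite Hw2; lra).
  assert (Hae : 0 < a*eps/2) by (assert (0 < a*eps) by nra; lra).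
  assert (Hwe : w < a * eps / 2).
  { destruct (Rlt_le_dec w (a*eps/2)) as [h|h]; [exact h|]. 
    assert ((a*eps/2)*(a*eps/2) <= w*w) by (apply Rmult_le_compat; lra). lra. }
  assert (Hk : x * (- ln w) < x * / w) by (apply Rmult_lt_compat_l; lra).
  assert (Hxw : x * / w = w / a).
  { field_simplify_eq; [|lra]. nra. }
  assert (w / a < eps / 2).
  { apply (Rmult_lt_reg_l a); [lra|]. field_simplify; lra. }
  nra.
Qed.

Lemma integrand_cont t a x : 0 < a < 1 -> 0 <= x -> continuous (integrand t a) x.
Proof.
  intros ha hx. destruct (Req_dec x 0) as [->|hx0].
  - apply continuity_pt_filterlim.
    apply continuity_pt_ext with (f := fun y => exp ((-t) * (y * ln (a*y)))).
    { intros y; unfold integrand; f_equal; ring. }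
    apply (continuity_pt_comp (fun y => (-t) * (y * ln (a*y))) exp).
    + apply continuity_pt_mult. apply continuity_pt_const; intros u v; reflexivity.
      apply h_cont0; exact ha.
    + apply derivable_continuous_pt, derivable_pt_exp.
  - apply (ex_derive_continuous (integrand t a)). unfold integrand. auto_derive. nra.
Qed.

Lemma integrand_ex t a b c : 0 < a < 1 -> 0 <= b <= c -> ex_RInt (integrand t a) b c.
Proof.
  intros ha hb. apply (ex_RInt_continuous (V:=R_CompleteNormedModule)). intros z hz.
  apply integrand_cont; auto. rewrite Rmin_left in hz by lra. lra.
Qed.

Lemma is_RInt_expk k b c : k <> 0 ->
  is_RInt (fun x => exp (- k * x)) b c ((exp (-k*b) - exp (-k*c))/k).
Proof.
  intros hk.
  replace ((exp (-k*b) - exp (-k*c))/k) with (minus (- exp(-k*c)/k) (- exp(-k*b)/k)).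
  2:{ unfold minus, plus, opp; simpl. field. auto. }
  apply (is_RInt_derive (fun x => - exp (-k*x)/k)).
  - intros x _. auto_derive; auto. field; auto.
  - intros x _. apply (ex_derive_continuous (fun x => exp (- k * x))). auto_derive. auto.
Qed.

Lemma exp_mono x y : x <= y -> exp x <= exp y.
Proof. intros [h|h]; [left; apply exp_increasing, h | right; rewrite h; reflexivity]. Qed.

Lemma RInt_expk k b c : k <> 0 ->
  RInt (fun x => exp (- k * x)) b c = (exp (-k*b) - exp (-k*c))/k.
Proof. intros hk. apply is_RInt_unique, is_RInt_expk, hk. Qed.

Lemma ex_expk k b c : ex_RInt (fun x => exp (- k * x)) b c.
Proof.
  apply (ex_RInt_continuous (V:=R_CompleteNormedModule)). intros z _.
  apply (ex_derive_continuous (fun x => exp (- k * x))). auto_derive. auto.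
Qed.

Lemma I_split t a m : 0 < a < 1 -> 0 <= m <= 1 ->
  RInt (integrand t a) 0 1 = RInt (integrand t a) 0 m + RInt (integrand t a) m 1.
Proof.
  intros ha hm. symmetry.
  apply (RInt_Chasles (V:=R_CompleteNormedModule)); apply integrand_ex; lra.
Qed.

Lemma I_lower t a η L : 0 < a < 1 -> t < 0 -> 0 < η <= 1 -> 0 < L ->
  (forall x, η <= x <= 1 -> - L <= ln (a * x)) ->
  (exp (- (-t*L)*η) - exp (- (-t*L)*1))/(-t*L) <= RInt (integrand t a) 0 1.
Proof.
  intros ha ht hη hL hln.
  rewrite (I_split t a η) by lra.
  assert (H0 : 0 <= RInt (integrand t a) 0 η).
  { apply RInt_ge_0; [lra| apply integrand_ex; lra |].
    intros x _. unfold integrand. left; apply exp_pos. }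
  assert (H1 : RInt (fun x => exp (- (-t*L) * x)) η 1 <= RInt (integrand t a) η 1).
  { apply RInt_le; [lra| apply ex_expk | apply integrand_ex; lra |].
    intros x hx. unfold integrand. apply exp_mono.
    assert (h := hln x ltac:(lra)).
    assert (0 <= (-t*x) * (ln (a*x) + L)) by (apply Rmult_le_pos; nra).
    nra. }
  rewrite RInt_expk in H1 by nra. lra.
Qed.

Lemma I_upper t a δ L2 : 0 < a < 1 -> t < 0 -> 0 < δ <= 1 -> 0 < L2 ->
  (forall x, 0 < x <= δ -> ln (a * x) <= - L2) ->
  RInt (integrand t a) 0 1 <=
    (exp (- (-t*L2)*0) - exp (- (-t*L2)*δ))/(-t*L2)
  + (exp (- (-t*(- ln a))*δ) - exp (- (-t*(-ln a))*1))/(-t*(-ln a)).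
Proof.
  intros ha ht hδ hL hln.
  assert (hla : ln a < 0) by (rewrite <- ln_1; apply ln_increasing; lra).
  rewrite (I_split t a δ) by lra.
  assert (H0 : RInt (integrand t a) 0 δ <= RInt (fun x => exp (- (-t*L2) * x)) 0 δ).
  { apply RInt_le; [lra| apply integrand_ex; lra | apply ex_expk |].
    intros x hx. unfold integrand. apply exp_mono.
    assert (h := hln x ltac:(lra)).
    assert (0 <= (-t*x) * (- L2 - ln (a*x))) by (apply Rmult_le_pos; nra).
    nra. }
  assert (H1 : RInt (integrand t a) δ 1 <= RInt (fun x => exp (- (-t*(-ln a)) * x)) δ 1).
  { apply RInt_le; [lra| apply integrand_ex; lra | apply ex_expk |].
    intros x hx. unfold integrand. apply exp_mono.
    assert (h : ln (a*x) <= ln a).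
    { apply ln_le; nra. }
    assert (0 <= (-t*x) * (ln a - ln (a*x))) by (apply Rmult_le_pos; nra).
    nra. }
  rewrite RInt_expk in H0 by nra. rewrite RInt_expk in H1 by nra. lra.
Qed.

Section Bounds.
Variable a : R.
Hypothesis ha : 0 < a < 1.
Let c := - ln a.

Definition Lf u := c + u + 2 * ln u.
Definition L2f u := c + u - 2 * ln u.
Definition Mf u := u + c + ln (u + c - 1).
Definition lo u := (Mf u / u) / (Lf u / u) * (exp (- (Lf u / u) * / u) - exp (- Lf u)).
Definition hi u := (Mf u / u) / (L2f u / u) + (Mf u / u) * / (c * / u + c * c * u).

Lemma c_pos : 0 < c.
Proof. unfold c. assert (ln a < 0) by (rewrite <- ln_1; apply ln_increasing; lra). lra. Qed.

Lemma exp_big u : 27 <= u -> u * u <= exp u.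
Proof.
  intros hu.
  assert (h1 := exp_ineq1_le (u/3)).
  assert (e : exp u = exp (u/3) * exp (u/3) * exp (u/3)).
  { rewrite <- !exp_plus. f_equal. field. }
  rewrite e.
  assert (0 <= 1 + u/3) by lra.
  assert ((1+u/3)*(1+u/3) <= exp (u/3) * exp(u/3)) by (apply Rmult_le_compat; lra).
  assert ((1+u/3)*(1+u/3)*(1+u/3) <= exp (u/3) * exp(u/3) * exp (u/3)) by (apply Rmult_le_compat; nra).
  nra.
Qed.

Lemma sandwich t : let u := ln (- t) in 27 <= u -> ln u < u / 2 -> t < 0 ->
  lo u <= fta t a / gta t a <= hi u.
Proof.
  intros u hu hlu ht.
  assert (hc := c_pos).
  set (s := - t).
  assert (hs : exp u = s) by (unfold u; apply exp_ln; unfold s; lra).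
  assert (hs0 : 0 < s) by (unfold s; lra).
  assert (hu2 := exp_big u hu). rewrite hs in hu2.
  assert (hlnu : 0 < ln u) by (rewrite <- ln_1; apply ln_increasing; lra).
  assert (hM : ln (u + c - 1) >= 0).
  { rewrite <- ln_1. apply Rle_ge, ln_le; lra. }
  assert (hMpos : 0 < Mf u) by (unfold Mf; lra).
  assert (hfg : fta t a / gta t a = s * RInt (integrand t a) 0 1 * Mf u).
  { unfold fta, gta, Mf.
    assert (e : ln (- t / a) = u + c).
    { unfold u, c, Rdiv. rewrite ln_mult, ln_Rinv; try lra. apply Rinv_0_lt_compat; lra. }
    rewrite e. unfold s. change (fun x => integrand t a x) with (integrand t a). unfold Mf in hMpos. field. lra. }
  rewrite hfg.
  assert (hlns : ln s = u) by (rewrite <- hs; apply ln_exp).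
  set (I := RInt (integrand t a) 0 1).
  set (M := Mf u).
  assert (huu : 1 <= u * u) by nra.
  assert (hsu : 1 <= s * u * u) by (rewrite Rmult_assoc; nra).
  split.
  - set (L := Lf u).
    assert (hL : 0 < L) by (unfold L, Lf; lra).
    set (η := / (s * u * u)).
    assert (hη0 : 0 < η) by (apply Rinv_0_lt_compat; lra).
    assert (hη1 : η <= 1).
    { unfold η. rewrite <- Rinv_1. apply Rinv_le_contravar; lra. }
    assert (HL := I_lower t a η L ha ht (conj hη0 hη1) hL).
    assert (HL' : (exp (- (- t * L) * η) - exp (- (- t * L) * 1)) / (- t * L) <= I).
    { apply HL. intros x hx.
      assert (h1 : ln (a * η) <= ln (a * x)) by (apply ln_le; nra).
      assert (h2 : ln (a * η) = - L).
      { assert (p : 0 < s * u * u) by lra.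
        unfold η, L, Lf, c. rewrite (ln_mult a), (ln_Rinv (s*u*u)), (ln_mult (s*u)), (ln_mult s), hlns; try lra.
        all: try nra; try (apply Rinv_0_lt_compat; lra). }
      lra. }
    clear HL. fold s in HL'.
    assert (e1 : exp (- (s * L) * η) = exp (- (L / u) * / u)).
    { f_equal. unfold η. field. lra. }
    assert (e2 : exp (- (s * L) * 1) <= exp (- L)).
    { apply exp_mono. nra. }
    rewrite e1 in HL'.
    set (E1 := exp (- (L / u) * / u)) in *.
    set (E := exp (- L)) in *.
    set (E2 := exp (- (s * L) * 1)) in *.
    assert (HL2 : (E1 - E) / (s * L) <= I).
    { eapply Rle_trans; [|exact HL']. unfold Rdiv.
      apply Rmult_le_compat_r; [left; apply Rinv_0_lt_compat; nra| lra]. }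
    assert (elo : lo u = (E1 - E) / (s * L) * (s * M)).
    { unfold lo. fold L. fold M. fold E. fold E1. field. split; lra. }
    rewrite elo.
    replace (s * I * M) with (I * (s * M)) by ring.
    apply Rmult_le_compat_r; [left; apply Rmult_lt_0_compat; [lra| unfold M; lra]| exact HL2].
  - set (L2 := L2f u).
    assert (hL2 : 0 < L2) by (unfold L2, L2f; lra).
    set (δ := u * u / s).
    assert (hδ0 : 0 < δ) by (unfold δ; apply Rdiv_lt_0_compat; nra).
    assert (hδ1 : δ <= 1).
    { unfold δ. apply (Rmult_le_reg_r s); [lra|]. field_simplify; lra. }
    assert (HU := I_upper t a δ L2 ha ht (conj hδ0 hδ1) hL2).
    assert (HU' : I <= (exp (- (- t * L2) * 0) - exp (- (- t * L2) * δ)) / (- t * L2) +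
       (exp (- (- t * - ln a) * δ) - exp (- (- t * - ln a) * 1)) / (- t * - ln a)).
    { apply HU. intros x hx.
      assert (h1 : ln (a * x) <= ln (a * δ)) by (apply ln_le; nra).
      assert (h2 : ln (a * δ) = - L2).
      { assert (p : 0 < / s) by (apply Rinv_0_lt_compat; lra).
        unfold δ, L2, L2f, c, Rdiv. rewrite (ln_mult a), (ln_mult (u*u)), (ln_mult u u), (ln_Rinv s), hlns; try lra.
        all: try nra; try (apply Rmult_lt_0_compat; nra). }
      lra. }
    clear HU. fold s in HU'. fold c in HU'.
    assert (e0 : exp (- (s * L2) * 0) = 1) by (rewrite Rmult_0_r; apply exp_0).
    assert (e1 : exp (- (s * c) * δ) = / exp (c * u * u)).
    { rewrite <- exp_Ropp. f_equal. unfold δ. field. lra. }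
    assert (hE1 : / exp (c * u * u) <= / (1 + c * u * u)).
    { apply Rinv_le_contravar. nra. apply exp_ineq1_le. }
    rewrite e0, e1 in HU'.
    assert (p1 := exp_pos (- (s * L2) * δ)).
    assert (p2 := exp_pos (- (s * c) * 1)).
    set (X := exp (- (s * L2) * δ)) in *.
    set (Y := exp (- (s * c) * 1)) in *.
    set (Z := / exp (c * u * u)) in *.
    set (W := / (1 + c * u * u)) in *.
    assert (HU2 : I <= / (s * L2) + W / (s * c)).
    { eapply Rle_trans; [exact HU'|]. unfold Rdiv.
      assert (q1 : 0 < / (s * L2)) by (apply Rinv_0_lt_compat; nra).
      assert (q2 : 0 < / (s * c)) by (apply Rinv_0_lt_compat; nra).
      assert (r1 : (1 - X) * / (s * L2) <= 1 * / (s * L2)) by (apply Rmult_le_compat_r; lra).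
      assert (r2 : (Z - Y) * / (s * c) <= W * / (s * c)) by (apply Rmult_le_compat_r; lra).
      lra. }
    assert (ehi : hi u = (/ (s * L2) + W / (s * c)) * (s * M)).
    { unfold hi. fold L2. fold M. unfold W. field.
      repeat split; try lra; nra. }
    rewrite ehi.
    replace (s * I * M) with (I * (s * M)) by ring.
    apply Rmult_le_compat_r; [left; apply Rmult_lt_0_compat; [lra| unfold M; lra]| exact HU2].
Qed.


Lemma is_lim_eq_l f x (l l' : R) : is_lim f x l -> l = l' -> is_lim f x l'.
Proof. intros h e; subst; exact h. Qed.

Lemma lim_mult f g x (lf lg : R) : is_lim f x lf -> is_lim g x lg ->
  is_lim (fun y => f y * g y) x (lf * lg).
Proof. intros h1 h2. apply (is_lim_mult f g x lf lg h1 h2). simpl; auto. Qed.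

Lemma lim_div f g x (lf lg : R) : is_lim f x lf -> is_lim g x lg -> lg <> 0 ->
  is_lim (fun y => f y / g y) x (lf / lg).
Proof.
  intros h1 h2 h3. apply (is_lim_div f g x lf lg h1 h2).
  - intros e; injection e; auto.
  - simpl; auto.
Qed.

Lemma lim_inv_u : is_lim (fun u => / u) p_infty 0.
Proof. apply (is_lim_inv (fun u => u) p_infty p_infty (is_lim_id _)). discriminate. Qed.

Lemma lim_shift k : is_lim (fun u => u + k) p_infty p_infty.
Proof.
  apply (is_lim_plus (fun u => u) (fun _ => k) p_infty p_infty k p_infty).
  apply is_lim_id. apply is_lim_const. unfold is_Rbar_plus; simpl. reflexivity.
Qed.

Lemma lim_lnk k : is_lim (fun u => ln (u + k) / u) p_infty 0.
Proof.
  apply is_lim_ext_loc with (f := fun u => ln (u + k) / (u + k) * (1 + k * / u)).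
  { exists (Rabs k). intros y hy.
    assert (0 <= Rabs k) by apply Rabs_pos.
    assert (- k <= Rabs k) by (rewrite <- Rabs_Ropp; apply Rle_abs).
    field. lra. }
  replace 0 with (0 * (1 + k * 0)) by ring.
  apply lim_mult.
  - apply (is_lim_comp (fun y => ln y / y) (fun u => u + k) p_infty 0 p_infty).
    apply is_lim_div_ln_p. apply lim_shift.
    exists 0. intros; discriminate.
  - apply (is_lim_plus' (fun _ => 1) (fun u => k * / u)). apply is_lim_const.
    apply lim_mult. apply is_lim_const. apply lim_inv_u.
Qed.

Lemma lim_ratio A B k : is_lim (fun u => (u + A + B * ln (u + k)) / u) p_infty 1.
Proof.
  apply is_lim_ext_loc with (f := fun u => 1 + A * / u + B * (ln (u + k) / u)).
  { exists 0. intros y hy. field. lra. }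
  cut (is_lim (fun u => 1 + A * / u + B * (ln (u + k) / u)) p_infty (1 + A * 0 + B * 0)).
  { intros h. replace (1 + A * 0 + B * 0) with 1 in h by ring. exact h. }
  apply is_lim_plus'. apply is_lim_plus'. apply is_lim_const.
  apply lim_mult. apply is_lim_const. apply lim_inv_u.
  apply lim_mult. apply is_lim_const. apply lim_lnk.
Qed.

Lemma lim_M : is_lim (fun u => Mf u / u) p_infty 1.
Proof.
  apply is_lim_ext_loc with (f := fun u => (u + c + 1 * ln (u + (c - 1))) / u).
  { exists 0. intros y hy. unfold Mf. f_equal. replace (y + c - 1) with (y + (c-1)) by ring. ring. }
  apply lim_ratio.
Qed.

Lemma lim_L : is_lim (fun u => Lf u / u) p_infty 1.
Proof.
  apply is_lim_ext_loc with (f := fun u => (u + c + 2 * ln (u + 0)) / u).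
  { exists 0. intros y hy. unfold Lf. rewrite Rplus_0_r. f_equal. ring. }
  apply lim_ratio.
Qed.

Lemma lim_L2 : is_lim (fun u => L2f u / u) p_infty 1.
Proof.
  apply is_lim_ext_loc with (f := fun u => (u + c + (-2) * ln (u + 0)) / u).
  { exists 0. intros y hy. unfold L2f. rewrite Rplus_0_r. f_equal. ring. }
  apply lim_ratio.
Qed.

Lemma lim_lo : is_lim lo p_infty 1.
Proof.
  assert (hc := c_pos).
  unfold lo. apply is_lim_eq_l with (1 / 1 * (exp (- 1 * 0) - 0)).
  2: { rewrite Rmult_0_r, exp_0; field. }
  apply lim_mult.
  - apply lim_div. apply lim_M. apply lim_L. lra.
  - apply is_lim_plus'.
    + apply (is_lim_comp_continuous (fun u => - (Lf u / u) * / u) exp).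
      apply lim_mult. apply (is_lim_opp (fun u => Lf u / u) p_infty 1). apply lim_L.
      apply lim_inv_u.
      apply (ex_derive_continuous exp). auto_derive. auto.
    + apply (is_lim_opp (fun u => exp (- Lf u)) p_infty 0).
      apply (is_lim_comp exp (fun u => - Lf u) p_infty 0 m_infty).
      apply is_lim_exp_m.
      2: { exists 0. intros; discriminate. }
      apply (is_lim_opp Lf p_infty p_infty).
      apply is_lim_le_p_loc with (f := fun u => u).
      { exists 1. intros y hy. unfold Lf.
        assert (0 <= ln y) by (rewrite <- ln_1; apply ln_le; lra). lra. }
      apply is_lim_id.
Qed.

Lemma lim_den : is_lim (fun u => c * / u + c * c * u) p_infty p_infty.
Proof.
  assert (hc := c_pos).
  apply is_lim_le_p_loc with (f := fun u => c * c * u).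
  { exists 0. intros y hy. assert (0 < c * / y) by (apply Rmult_lt_0_compat; [lra| apply Rinv_0_lt_compat; lra]). lra. }
  apply is_lim_spec. intros M. exists (M / (c*c)). intros y hy.
  assert (0 < c * c) by nra.
  apply (Rmult_lt_compat_l (c*c)) in hy; [|lra].
  replace (c * c * (M / (c * c))) with M in hy by (field; lra). exact hy.
Qed.

Lemma lim_hi : is_lim hi p_infty 1.
Proof.
  unfold hi. apply is_lim_eq_l with (1 / 1 + 1 * 0). 2: field.
  apply is_lim_plus'.
  - apply lim_div. apply lim_M. apply lim_L2. lra.
  - apply lim_mult. apply lim_M.
    apply (is_lim_inv _ p_infty p_infty lim_den). discriminate.
Qed.

End Bounds.

Lemma lim_G : is_lim (fun t => ln (- t)) m_infty p_infty.
Proof.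
  apply (is_lim_comp ln (fun t => - t) m_infty p_infty p_infty).
  apply is_lim_ln_p.
  apply (is_lim_opp (fun t => t) m_infty m_infty). apply is_lim_id.
  exists 0. intros; discriminate.
Qed.

Theorem mainTheorem7 (a : R) (ha0 : 0 < a) (ha1 : a < 1) :
  is_lim (fun t => fta t a / gta t a) m_infty 1.
Proof.
  assert (ha : 0 < a < 1) by lra.
  assert (hl := proj2 (is_lim_spec _ _ _) is_lim_div_ln_p).
  destruct (hl (mkposreal (1/2) ltac:(lra))) as [N1 hN1]. simpl in hN1.
  set (U := Rmax N1 27).
  apply is_lim_le_le_loc with (f := fun t => lo a (ln (- t))) (g := fun t => hi a (ln (- t))).
  - exists (- exp U). intros t ht.
    assert (hexp := exp_pos U).
    assert (hu : U < ln (- t)).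
    { rewrite <- (ln_exp U). apply ln_increasing; lra. }
    assert (hU1 : N1 <= U) by apply Rmax_l.
    assert (hU2 : 27 <= U) by apply Rmax_r.
    apply (sandwich a ha t); [lra| |lra].
    set (u := ln (- t)) in *.
    assert (h := hN1 u ltac:(lra)). rewrite Rminus_0_r in h.
    apply Rabs_def2 in h. destruct h as [h _].
    apply (Rmult_lt_compat_r u) in h; [|lra].
    field_simplify in h; lra.
  - apply (is_lim_comp (lo a) (fun t => ln (- t)) m_infty 1 p_infty).
    apply lim_lo; exact ha. apply lim_G. exists 0. intros; discriminate.
  - apply (is_lim_comp (hi a) (fun t => ln (- t)) m_infty 1 p_infty).
    apply lim_hi; exact ha. apply lim_G. exists 0. intros; discriminate.
Qed.
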